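(* Let $\alpha$ be an infinite permutation with $p_{\alpha}(n)=n$ for all $n\ge1$. Then the underlying word $s$ of $\alpha$ is either ultimately periodic or Sturmian.
   Context: An infinite permutation is an equivalence class of sequences of pairwise distinct reals under $a\sim b\iff(a[i]<a[j]\Leftrightarrow b[i]<b[j]\ \forall i,j)$; write $\alpha=(\alpha[n])_{n\ge0}$ with the induced order. $p_\alpha(n)$ is the number of distinct factors $\alpha[i..i+n-1]$ of length $n$, each regarded as a finite permutation (relative order). The underlying word of $\alpha$ is the infinite binary word $s=s[0]s[1]\cdots$ with $s[i]=0$ if $\alpha[i]<\alpha[i+1]$ and $s[i]=1$ otherwise. An infinite word is ultimately periodic if it equals $vwww\cdots$ for finite words $v,w$ with $w$ nonempty. An infinite word $u$ is Sturmian if it is not ultimately periodic and has exactly $n+1$ distinct factors (blocks of consecutive letters) of length $n$ for every $n\ge1$. *)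

(* Defs.v *)
From Stdlib Require Import Reals.
From HB Require Import structures.
From mathcomp Require Import all_boot all_order all_algebra.
From mathcomp Require Import boolp.
From mathcomp Require Import Rstruct.
Set Implicit Arguments. Unset Strict Implicit. Unset Printing Implicit Defensive.
Import Order.TTheory GRing.Theory Num.Theory.
Local Open Scope ring_scope.

(* An infinite permutation is represented by a sequence a : nat -> R of
   pairwise distinct reals (injective a); all notions below depend only on
   the relative order, i.e. on the equivalence class. *)

(* The factor alpha[i..i+n-1], regarded as a finite permutation (relative
   order): the table of comparisons a[i+j] < a[i+k] for j,k < n. *)
Definition perm_factor (a : nat -> R) (i n : nat) : {ffun 'I_n * 'I_n -> bool} :=
  [ffun jk : 'I_n * 'I_n => a (i + jk.1)%N < a (i + jk.2)%N].

Definition perm_complexity (a : nat -> R) (n : nat) : nat :=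
  #|[set p : {ffun 'I_n * 'I_n -> bool} | `[< exists i, p = perm_factor a i n >] ]|.

Definition underlying_word (a : nat -> R) : nat -> bool :=
  fun i => ~~ (a i < a i.+1).

Definition word_factor (s : nat -> bool) (i n : nat) : {ffun 'I_n -> bool} :=
  [ffun j : 'I_n => s (i + j)%N].

Definition word_complexity (s : nat -> bool) (n : nat) : nat :=
  #|[set w : {ffun 'I_n -> bool} | `[< exists i, w = word_factor s i n >] ]|.

(* s = v w w w ... with w nonempty. *)
Definition ultimately_periodic (s : nat -> bool) : Prop :=
  exists (v w : seq bool), (0 < size w)%N /\
    forall i : nat,
      s i = if (i < size v)%N then nth false v i
            else nth false w ((i - size v) %% size w).

Definition sturmian (s : nat -> bool) : Prop :=
  ~ ultimately_periodic s /\
  forall n : nat, (1 <= n)%N -> word_complexity s n = n.+1.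

(* Main.v *)
Require Import Defs.
From Stdlib Require Import Reals.
From mathcomp Require Import all_boot all_order all_algebra.
From mathcomp Require Import Rstruct.
From mathcomp Require Import boolp zify.
Set Implicit Arguments. Unset Strict Implicit. Unset Printing Implicit Defensive.

Definition WS (s : nat -> bool) n :=
  [set w : {ffun 'I_n -> bool} | `[< exists i, w = word_factor s i n >] ].

Lemma WS_card s n : word_complexity s n = #|WS s n|.
Proof. by []. Qed.

Lemma inWS s n i : word_factor s i n \in WS s n.
Proof. by rewrite inE; apply/asboolP; exists i. Qed.

Lemma WSP s n w : w \in WS s n -> exists i, w = word_factor s i n.
Proof. by rewrite inE => /asboolP. Qed.

Definition pre n (w : {ffun 'I_n.+1 -> bool}) : {ffun 'I_n -> bool} :=
  [ffun j => w (widen_ord (leqnSn n) j)].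

Lemma pre_wf s i n : pre (word_factor s i n.+1) = word_factor s i n.
Proof. by apply/ffunP => j; rewrite !ffunE. Qed.

Lemma pre_img s n : @pre n @: WS s n.+1 = WS s n.
Proof.
apply/setP => w; apply/idP/idP.
- by case/imsetP => x /WSP [i ->] ->; rewrite pre_wf inWS.
- by case/WSP => i ->; rewrite -pre_wf; apply: imset_f; apply: inWS.
Qed.

Lemma WS_mono s n : #|WS s n| <= #|WS s n.+1|.
Proof. by rewrite -{1}pre_img leq_imset_card. Qed.

Lemma periodic_UP s i0 d : 0 < d -> (forall k, s (i0 + k) = s (i0 + d + k)) ->
  ultimately_periodic s.
Proof.
move=> d0 H.
have Hq : forall q r, s (i0 + r + q * d) = s (i0 + r).
  elim=> [|q IH] r; first by rewrite mul0n addn0.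
  have -> : i0 + r + q.+1 * d = i0 + d + (r + q * d) by rewrite mulSn; lia.
  by rewrite -H addnA IH.
exists (mkseq s i0), (mkseq (fun r => s (i0 + r)) d).
rewrite size_mkseq d0; split=> // i; rewrite size_mkseq.
case: ltnP => hi; first by rewrite nth_mkseq.
rewrite nth_mkseq ?ltn_pmod //.
by rewrite -(Hq ((i - i0) %/ d)) -addnA (addnC _ (_ * d)) -divn_eq subnKC.
Qed.

Lemma det_UP s n : (forall i j, word_factor s i n = word_factor s j n ->
  s (i + n) = s (j + n)) -> ultimately_periodic s.
Proof.
move=> hyp.
pose N := (2 ^ n).+1.
pose h := fun i : 'I_N => word_factor s i n.
have [[i [j [ij hij]]]|] := pselect (exists i j : 'I_N, i != j /\ h i = h j); last first.
  move=> nex; have injh : injective h.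
    move=> x y hxy; apply/eqP; apply/negPn/negP => nxy; apply: nex.
    by exists x, y.
  have := @leq_card _ _ h injh; rewrite card_ffun card_bool card_ord /N /=.
  by rewrite card_ord ltnn.
have gen : forall x y : nat, x < y -> word_factor s x n = word_factor s y n ->
    ultimately_periodic s.
  move=> x y lxy hw.
  have P : forall k m, m < n -> s (x + k + m) = s (y + k + m).
    elim=> [|k IH] m mn.
      by move/ffunP: hw => /(_ (Ordinal mn)); rewrite !ffunE !addn0.
    have hwk : word_factor s (x + k) n = word_factor s (y + k) n.
      by apply/ffunP => t; rewrite !ffunE IH.
    case: (ltnP m.+1 n) => hm.
      have -> : x + k.+1 + m = x + k + m.+1 by lia.
      have -> : y + k.+1 + m = y + k + m.+1 by lia.
      exact: IH.
    have en : n = m.+1 by apply/eqP; rewrite eqn_leq hm mn.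
    have -> : x + k.+1 + m = x + k + n by lia.
    have -> : y + k.+1 + m = y + k + n by lia.
    exact: hyp.
  apply: (@periodic_UP s (x + n) (y - x)); first by rewrite subn_gt0.
  move=> k.
  have hwk : word_factor s (x + k) n = word_factor s (y + k) n.
    by apply/ffunP => t; rewrite !ffunE P.
  have := hyp _ _ hwk.
  rewrite [x + n + (y - x)]addnC addnA subnK ?(ltnW lxy) //.
  by rewrite -!addnA (addnC k n) => ->; rewrite (addnC n k).
case: (ltngtP i j) => lij.
- exact: (gen i j lij hij).
- exact: (gen j i lij (esym hij)).
- by move: ij; rewrite (val_inj lij) eqxx.
Qed.

Lemma eq_UP s n : #|WS s n.+1| = #|WS s n| -> ultimately_periodic s.
Proof.
move=> hc; apply: (@det_UP s n) => i j hij.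
have inj : {in WS s n.+1 &, injective (@pre n)}.
  by apply/imset_injP; rewrite pre_img hc.
have := inj _ _ (inWS s n.+1 i) (inWS s n.+1 j).
by rewrite !pre_wf => /(_ hij) /ffunP /(_ ord_max); rewrite !ffunE /= => ->.
Qed.

Lemma WS_lower s : ~ ultimately_periodic s -> forall n, n.+1 <= #|WS s n|.
Proof.
move=> nUP; elim=> [|n IH].
  by apply/card_gt0P; exists (word_factor s 0 0); apply: inWS.
have := WS_mono s n; rewrite leq_eqVlt => /orP [/eqP e|lt].
  by exfalso; apply: nUP; apply: (@eq_UP s n).
exact: leq_ltn_trans IH lt.
Qed.

Definition fp n (p : {ffun 'I_n.+1 * 'I_n.+1 -> bool}) : {ffun 'I_n -> bool} :=
  [ffun j : 'I_n => ~~ p (widen_ord (leqnSn n) j, lift ord0 j)].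

Lemma word_upper a n : word_complexity (underlying_word a) n <= perm_complexity a n.+1.
Proof.
rewrite WS_card.
apply: (leq_trans (subset_leq_card _) (leq_imset_card (@fp n) _)).
apply/subsetP => w /WSP [i ->]; apply/imsetP.
exists (perm_factor a i n.+1); first by rewrite inE; apply/asboolP; exists i.
by apply/ffunP => j; rewrite !ffunE /= /underlying_word addnS.
Qed.

Theorem proposition5 (a : nat -> R) (a_inj : injective a)
  (hp : forall n : nat, (1 <= n)%N -> perm_complexity a n = n) :
  ultimately_periodic (underlying_word a) \/ sturmian (underlying_word a).
Proof.
have [h|h] := pselect (ultimately_periodic (underlying_word a)); first by left.
right; split=> // n n1.
apply/eqP; rewrite eqn_leq; apply/andP; split.
  by rewrite -(hp n.+1) // word_upper.
by rewrite WS_card WS_lower.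
Qed.
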